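(* Let $\mathcal{G}=(\mathcal{V},\mathcal{E},\mathbf{X})$ be an attributed graph with nodes $\mathcal{V}=\{v_1,\dots,v_n\}$ and node feature vectors $\mathbf{x}_{v}\in\mathbb{R}^d$ (row vectors), and suppose each node $v_i$ has a sensitive value $s_i\in\mathcal{A}=\{a_1,\dots,a_\zeta\}$. For $a\in\mathcal{A}$ let $\mathcal{V}_a=\{v_j: s_j=a\}$ and $\mathcal{V}_{\neq a}=\mathcal{V}\setminus\mathcal{V}_a$, both assumed nonempty. Let $\tilde{\mathbf{A}}\in\mathbb{R}^{n\times n}$ be the random walk probability matrix, where $\tilde{\mathbf{A}}[i,j]$ is the probability that a $K$-step random walk starting at $v_i$ terminates at $v_j$ (so each row of $\tilde{\mathbf{A}}$ is a probability distribution). Define $$\beta[a,a]=\frac{1}{|\mathcal{V}_a|}\sum_{v_i\in\mathcal{V}_a,\,v_j\in\mathcal{V}_a}\tilde{\mathbf{A}}[i,j],\qquad \beta[\neq a,a]=\frac{1}{|\mathcal{V}_{\neq a}|}\sum_{v_i\in\mathcal{V}_{\neq a},\,v_j\in\mathcal{V}_a}\tilde{\mathbf{A}}[i,j].$$ Let $\mu_a=\frac{1}{|\mathcal{V}_a|}\sum_{v\in\mathcal{V}_a}\mathbf{x}_v$, $\mu_{\neq a}=\frac{1}{|\mathcal{V}_{\neq a}|}\sum_{v\in\mathcal{V}_{\neq a}}\mathbf{x}_v$, $dev(\mathcal{V}_a)=\max_{v\in\mathcal{V}_a}\|\mathbf{x}_v-\mu_a\|_\infty$, $dev(\mathcal{V}_{\neq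 a})=\max_{v\in\mathcal{V}_{\neq a}}\|\mathbf{x}_v-\mu_{\neq a}\|_\infty$, and $\delta_a=\max\{dev(\mathcal{V}_a),dev(\mathcal{V}_{\neq a})\}$. Consider a $K$-layer simple GCN (SGCN) with parameter matrix $\mathbf{W}$, i.e. the model whose logit at node $v$ is $\mathbf{p}_v=\mathbf{h}_v\mathbf{W}$ with $\mathbf{h}_v=\sum_{u\in\mathcal{V}}\tilde{\mathbf{A}}[v,u]\,\mathbf{x}_u$, and let $$\hat{\mathcal{L}}_{\text{dp}}=\sum_{a\in\mathcal{A}}\left\|\frac{\sum_{v_i\in\mathcal{V}_a}\mathbf{p}_{v_i}}{|\mathcal{V}_a|}-\frac{\sum_{v_j\in\mathcal{V}_{\neq a}}\mathbf{p}_{v_j}}{|\mathcal{V}_{\neq a}|}\right\|_2 .$$ Then, for any such SGCN with parameters $\mathbf{W}$, $$\hat{\mathcal{L}}_{\text{dp}}\le\sum_{a\in\mathcal{A}}\|\mathbf{W}\|_2\left(|\beta[a,a]-\beta[\neq a,a]|\cdot\|\mu_a-\mu_{\neq a}\|_2+2\sqrt{d}\sum_{a'\in\mathcal{A}}\delta_{a'}\right),$$ where $\|\mathbf{W}\|_2$ is the spectral norm of $\mathbf{W}$.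
   Context: A simple GCN (SGCN) is a graph convolutional network without nonlinear activations between layers, so that its $K$-layer node representation is the $K$-step propagated feature $\mathbf{h}_v=\sum_{u}\tilde{\mathbf{A}}[v,u]\mathbf{x}_u$ and its prediction is $\sigma(\mathbf{h}_v\mathbf{W})$ with $\sigma$ the softmax; the vector $\mathbf{p}_v=\mathbf{h}_v\mathbf{W}$ (input to the softmax) is called the logit. $d$ is the dimension of the node feature vectors. *)

(* Defs.v *)
From HB Require Import structures.
From mathcomp Require Import all_boot all_order all_algebra.
From mathcomp Require Import classical_sets reals.
Set Implicit Arguments. Unset Strict Implicit. Unset Printing Implicit Defensive.
Import Order.TTheory GRing.Theory Num.Theory.
Local Open Scope ring_scope.
Local Open Scope classical_set_scope.

Section Defs.
Variable R : realType.

Definition norm2 m (v : 'rV[R]_m) : R := Num.sqrt (\sum_(i < m) v 0 i ^+ 2).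
Definition normInf m (v : 'rV[R]_m) : R := \big[Num.max/0]_(i < m) `|v 0 i|.

Definition spec_norm d c (W : 'M[R]_(d, c)) : R :=
  sup [set norm2 (x *m W) | x in [set x : 'rV[R]_d | norm2 x = 1]].

Definition degree n (e : rel 'I_n) (i : 'I_n) : nat := #|[set j | e i j]|.

Definition rw_step n (e : rel 'I_n) : 'M[R]_n :=
  \matrix_(i, j) ((e i j)%:R / (degree e i)%:R).

Definition rw_matrix n (e : rel 'I_n) (K : nat) : 'M[R]_n :=
  iter K (fun M => M *m rw_step e) 1%:M.

Definition grp n (A : finType) (s : 'I_n -> A) (a : A) : {set 'I_n} := [set i | s i == a].
Definition grpC n (A : finType) (s : 'I_n -> A) (a : A) : {set 'I_n} := [set i | s i != a].

Definition beta_in n (A : finType) (s : 'I_n -> A) (At : 'M[R]_n) (a : A) : R :=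
  (#|grp s a|%:R)^-1 * \sum_(i in grp s a) \sum_(j in grp s a) At i j.
Definition beta_out n (A : finType) (s : 'I_n -> A) (At : 'M[R]_n) (a : A) : R :=
  (#|grpC s a|%:R)^-1 * \sum_(i in grpC s a) \sum_(j in grp s a) At i j.

Definition mean n d (X : 'M[R]_(n, d)) (S : {set 'I_n}) : 'rV[R]_d :=
  (#|S|%:R)^-1 *: \sum_(v in S) row v X.
Definition dev n d (X : 'M[R]_(n, d)) (S : {set 'I_n}) : R :=
  \big[Num.max/0]_(v in S) normInf (row v X - mean X S).
Definition delta n d (A : finType) (s : 'I_n -> A) (X : 'M[R]_(n, d)) (a : A) : R :=
  Num.max (dev X (grp s a)) (dev X (grpC s a)).

Definition sgcn_h n d (At : 'M[R]_n) (X : 'M[R]_(n, d)) (v : 'I_n) : 'rV[R]_d :=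
  \sum_(u < n) At v u *: row u X.
Definition logit n d c (At : 'M[R]_n) (X : 'M[R]_(n, d)) (W : 'M[R]_(d, c)) (v : 'I_n)
  : 'rV[R]_c := sgcn_h At X v *m W.

Definition L_dp n d c (A : finType) (s : 'I_n -> A) (At : 'M[R]_n) (X : 'M[R]_(n, d))
  (W : 'M[R]_(d, c)) : R :=
  \sum_(a : A) norm2 ((#|grp s a|%:R)^-1 *: \sum_(i in grp s a) logit At X W i
                      - (#|grpC s a|%:R)^-1 *: \sum_(j in grpC s a) logit At X W j).

End Defs.

(* Main.v *)
Require Import Defs.
From HB Require Import structures.
From mathcomp Require Import all_boot all_order all_algebra.
From mathcomp Require Import boolp classical_sets reals.
From mathcomp Require Import ring lra.
Import Order.TTheory GRing.Theory Num.Theory.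
Local Open Scope ring_scope.

Lemma sumsq_ge0 {R : realType} {m} (f : 'I_m -> R) : 0 <= \sum_i f i ^+ 2.
Proof. by apply: sumr_ge0 => i _; apply: sqr_ge0. Qed.

Lemma sumsq_eq0 {R : realType} {m} {f : 'I_m -> R} :
  \sum_i f i ^+ 2 = 0 -> forall i, f i = 0.
Proof.
move=> H i; have := (@psumr_eq0P _ _ _ _ (fun j _ => sqr_ge0 (f j)) H i isT).
by move/eqP; rewrite sqrf_eq0 => /eqP.
Qed.

Lemma CS {R : realType} {m} (f g : 'I_m -> R) :
  \sum_i f i * g i <= Num.sqrt (\sum_i f i ^+ 2) * Num.sqrt (\sum_i g i ^+ 2).
Proof.
set A := \sum_i f i ^+ 2; set B := \sum_i g i ^+ 2.
have A0 := sumsq_ge0 f; have B0 := sumsq_ge0 g.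
have [Az|Anz] := eqVneq A 0.
  rewrite big1 ?Az ?sqrtr0 ?mul0r // => i _.
  by rewrite (sumsq_eq0 Az) mul0r.
have [Bz|Bnz] := eqVneq B 0.
  rewrite big1 ?Bz ?sqrtr0 ?mulr0 // => i _.
  by rewrite (sumsq_eq0 Bz) mulr0.
set a := Num.sqrt A; set b := Num.sqrt B.
have a0 : 0 < a by rewrite sqrtr_gt0 lt_def Anz A0.
have b0 : 0 < b by rewrite sqrtr_gt0 lt_def Bnz B0.
have aa : a ^+ 2 = A by rewrite sqr_sqrtr.
have bb : b ^+ 2 = B by rewrite sqr_sqrtr.
have H : \sum_i (2 * (f i * g i) * (a * b)) <= \sum_i (f i ^+ 2 * b ^+ 2 + g i ^+ 2 * a ^+ 2).
  apply: ler_sum => i _.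
  have := sqr_ge0 (f i * b - g i * a). nra.
rewrite big_split /= -!mulr_suml -/A -/B -aa -bb in H.
rewrite -mulr_sumr in H.
have ab0 : 0 < a * b by rewrite mulr_gt0.
rewrite -(ler_pM2r ab0).
set S := \sum_i f i * g i in H *.
set t := a * b in ab0 H *.
have e : a ^+ 2 * b ^+ 2 + b ^+ 2 * a ^+ 2 = 2 * (t * t) by rewrite /t; ring.
rewrite e in H; lra.
Qed.

Lemma norm2_ge0 {R : realType} {m} (v : 'rV[R]_m) : 0 <= norm2 v.
Proof. exact: sqrtr_ge0. Qed.

Lemma norm2D {R : realType} {m} (u v : 'rV[R]_m) : norm2 (u + v) <= norm2 u + norm2 v.
Proof.
rewrite /norm2.
have a0 := sqrtr_ge0 (\sum_i u 0 i ^+ 2).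
have b0 := sqrtr_ge0 (\sum_i v 0 i ^+ 2).
rewrite -(ger0_norm (addr_ge0 a0 b0)) -sqrtr_sqr ler_sqrt ?sqr_ge0 //.
have -> : \sum_i (u + v) 0 i ^+ 2 = \sum_i u 0 i ^+ 2 + 2 * \sum_i (u 0 i * v 0 i) + \sum_i v 0 i ^+ 2.
  rewrite mulr_sumr -!big_split /=; apply: eq_bigr => i _; rewrite mxE; ring.
have := CS (fun i => u 0 i) (fun i => v 0 i).
rewrite sqrrD !sqr_sqrtr ?sumsq_ge0 //.
nra.
Qed.

Lemma norm2Z {R : realType} {m} k (v : 'rV[R]_m) : norm2 (k *: v) = `|k| * norm2 v.
Proof.
rewrite /norm2 -sqrtr_sqr -sqrtrM ?sqr_ge0 //; congr Num.sqrt.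
rewrite mulr_sumr; apply: eq_bigr => i _; rewrite mxE; ring.
Qed.

Lemma norm2_bound {R : realType} {m} (v : 'rV[R]_m) b : 0 <= b ->
  (forall i, `|v 0 i| <= b) -> norm2 v <= Num.sqrt (m%:R) * b.
Proof.
move=> b0 H; rewrite /norm2 -(ger0_norm b0) -sqrtr_sqr -sqrtrM ?ler0n //.
rewrite ler_sqrt ?mulr_ge0 ?ler0n ?sqr_ge0 //.
have -> : m%:R * b ^+ 2 = \sum_(i < m) b ^+ 2 by rewrite sumr_const card_ord mulr_natl.
apply: ler_sum => i _; have := H i; rewrite ler_norml => /andP[h1 h2].
nra.
Qed.
Local Open Scope classical_set_scope.


Lemma le_sum1 {R : realType} {I : finType} (F : I -> R) j :
  (forall i, 0 <= F i) -> F j <= \sum_i F i.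
Proof.
move=> H; rewrite (bigD1 j) //= lerDl; apply: sumr_ge0 => i _; exact: H.
Qed.

Lemma norm2_eq0 {R : realType} {m} {v : 'rV[R]_m} : norm2 v = 0 -> v = 0.
Proof.
rewrite /norm2 => /eqP; rewrite sqrtr_eq0 => H.
have H0 : \sum_i v 0 i ^+ 2 = 0 by apply/eqP; rewrite eq_le H sumsq_ge0.
apply/rowP => i; rewrite mxE; exact: (sumsq_eq0 H0).
Qed.

Lemma spec_set_ub {R : realType} d c (W : 'M[R]_(d, c)) :
  exists B, forall y : 'rV[R]_d, norm2 y = 1 -> norm2 (y *m W) <= B.
Proof.
exists (Num.sqrt (c%:R) * \sum_i \sum_k `|W i k|) => y y1.
apply: norm2_bound; first by apply: sumr_ge0 => i _; apply: sumr_ge0.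
move=> k; rewrite mxE.
have ys : \sum_i y 0 i ^+ 2 = 1.
  by move: y1; rewrite /norm2 => /(congr1 (fun x => x ^+ 2)); rewrite sqr_sqrtr ?sumsq_ge0 // expr1n.
apply: (le_trans (ler_norm_sum _ _ _)); apply: ler_sum => i _.
rewrite normrM; apply: (@le_trans _ _ (`|W i k|)); last first.
  by rewrite (bigD1 k) //= lerDl sumr_ge0.
have yi : `|y 0 i| <= 1.
  have := le_sum1 (fun i => y 0 i ^+ 2) i (fun i => sqr_ge0 _).
  rewrite ys => h; rewrite ler_norml; apply/andP; split; nra.
by rewrite -[X in _ <= X]mul1r ler_wpM2r.
Qed.

Lemma spec_norm_ge0 {R : realType} d c (W : 'M[R]_(d, c)) : 0 <= spec_norm W.
Proof.
rewrite /spec_norm.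
set E := [set _ | _ in _].
have [hs|nhs] := pselect (has_sup E); last by rewrite sup_out.
case: (hs) => [[z [x x1 zE]]] _.
apply: (@le_trans _ _ z); first by rewrite -zE norm2_ge0.
by apply: sup_upper_bound => //; exists x.
Qed.

Lemma spec_norm_le {R : realType} d c (W : 'M[R]_(d, c)) (x : 'rV[R]_d) :
  norm2 (x *m W) <= spec_norm W * norm2 x.
Proof.
have [x0|xn0] := eqVneq (norm2 x) 0.
  by rewrite x0 (norm2_eq0 x0) mul0mx mulr0 /norm2 big1 ?sqrtr0 // => i _; rewrite mxE expr0n.
have N0 : 0 < norm2 x by rewrite lt_def xn0 norm2_ge0.
set y := (norm2 x)^-1 *: x.
have y1 : norm2 y = 1 by rewrite norm2Z ger0_norm ?invr_ge0 ?norm2_ge0 // mulVf.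
have yW : norm2 (y *m W) = (norm2 x)^-1 * norm2 (x *m W).
  by rewrite -scalemxAl norm2Z ger0_norm ?invr_ge0 ?norm2_ge0.
have hs : has_sup [set norm2 (x *m W) | x in [set x : 'rV[R]_d | norm2 x = 1]].
  split; first by exists (norm2 (y *m W)); exists y.
  have [B HB] := spec_set_ub _ _ W.
  by exists B => z [w w1 <-]; apply: HB.
have := sup_upper_bound hs (ex_intro2 _ _ y y1 erefl).
rewrite yW -/(spec_norm W) => h.
rewrite mulrC -ler_pdivrMl //.
Qed.

Local Close Scope classical_set_scope.

Lemma bigmax_ge {R : realType} (I : eqType) (r : seq I) (P : pred I) (F : I -> R) i :
  i \in r -> P i -> F i <= \big[Num.max/0]_(j <- r | P j) F j.
Proof.
elim: r => // x r IH; rewrite inE big_cons => /orP[/eqP<-|ir] Pi.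
  by rewrite Pi le_max lexx.
case: ifP => _; last exact: IH.
by rewrite le_max IH ?orbT.
Qed.

Lemma bigmax_ge0 {R : realType} (I : eqType) (r : seq I) (P : pred I) (F : I -> R) :
  0 <= \big[Num.max/0]_(j <- r | P j) F j.
Proof.
apply: (big_rec (fun x => 0 <= x)) => // i x _ hx; by rewrite le_max hx orbT.
Qed.

Lemma normInf_ge {R : realType} {m} (v : 'rV[R]_m) k : `|v 0 k| <= normInf v.
Proof. rewrite /normInf; exact: (@bigmax_ge R _ (index_enum _) xpredT (fun k => `|v 0 k|) k (mem_index_enum _) isT). Qed.

Lemma dev_ge {R : realType} {n d} (X : 'M[R]_(n, d)) (S : {set 'I_n}) u :
  u \in S -> normInf (row u X - mean X S) <= dev X S.
Proof. move=> uS; rewrite /dev; exact: (@bigmax_ge R _ (index_enum _) (fun v => v \in S) (fun v => normInf (row v X - mean X S)) u (mem_index_enum _) uS). Qed.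

Lemma delta_ge0 {R : realType} {n d} (A : finType) (s : 'I_n -> A) (X : 'M[R]_(n, d)) a :
  0 <= delta s X a.
Proof. by rewrite /delta le_max /dev bigmax_ge0. Qed.

Lemma rw_stoch {R : realType} n (e : rel 'I_n) K :
  (forall i : 'I_n, (0 < degree e i)%N) ->
  (forall i j, 0 <= rw_matrix R e K i j) /\ (forall i, \sum_j rw_matrix R e K i j = 1).
Proof.
move=> hdeg.
have Pge0 : forall i j, 0 <= rw_step R e i j.
  by move=> i j; rewrite mxE divr_ge0 ?ler0n.
have Psum : forall i, \sum_j rw_step R e i j = 1.
  move=> i; under eq_bigr do rewrite mxE.
  rewrite -mulr_suml -natr_sum.
  have -> : (\sum_j (e i j : nat))%N = degree e i.
    rewrite /degree -sum1_card [RHS]big_mkcond /=; apply: eq_bigr => j _.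
    by rewrite /in_mem /= /in_set /mkset /= asboolb; case: (e i j).
  by rewrite divff // pnatr_eq0 -lt0n hdeg.
elim: K => [|K [IH1 IH2]].
  split=> [i j|i]; rewrite /rw_matrix /=.
    by rewrite mxE ler0n.
  rewrite (bigD1 i) //= big1 ?addr0; first by rewrite mxE eqxx.
  by move=> j /negbTE ji; rewrite mxE eq_sym ji.
rewrite /rw_matrix iterS -/(rw_matrix R e K).
split=> [i j|i].
  by rewrite mxE; apply: sumr_ge0 => k _; rewrite mulr_ge0.
under eq_bigr do rewrite mxE.
rewrite exchange_big /=.
under eq_bigr do rewrite -mulr_sumr Psum mulr1.
exact: IH2.
Qed.

Lemma zmod_aux (V : zmodType) (c x y z w : V) : c + x + y - (c + z + w) = (x - z) + (y - w).
Proof. by rewrite -[c + x + y]addrA -[c + z + w]addrA opprD addrACA subrr add0r opprD addrACA. Qed.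

Lemma avg_decomp {R : realType} {n d} (S : {set 'I_n}) (c v : 'rV[R]_d) (al : 'I_n -> R)
  (g : 'I_n -> 'rV[R]_d) : (0 < #|S|)%N ->
  (#|S|%:R)^-1 *: \sum_(i in S) (c + al i *: v + g i) =
  c + ((#|S|%:R)^-1 * \sum_(i in S) al i) *: v + (#|S|%:R)^-1 *: \sum_(i in S) g i.
Proof.
move=> S0.
rewrite !big_split /= sumr_const -scaler_suml !scalerDr scalerA -scaler_nat scalerA.
by rewrite mulVf ?pnatr_eq0 -?lt0n // scale1r.
Qed.

Lemma avg_bound {R : realType} {n d} (S : {set 'I_n}) (g : 'I_n -> 'rV[R]_d) b k :
  (0 < #|S|)%N -> (forall i, `|g i 0 k| <= b) ->
  `|((#|S|%:R)^-1 *: \sum_(i in S) g i) 0 k| <= b.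
Proof.
move=> S0 H.
rewrite mxE summxE normrM ger0_norm ?invr_ge0 ?ler0n // ler_pdivrMl ?ltr0n //.
apply: le_trans (ler_norm_sum _ _ _) _.
apply: (@le_trans _ _ (\sum_(i in S) b)); first by apply: ler_sum => i _; exact: H.
by rewrite sumr_const mulr_natl.
Qed.

Theorem theorem1 (R : realType) (n d c K : nat) (A : finType)
  (e : rel 'I_n) (X : 'M[R]_(n, d)) (s : 'I_n -> A) (W : 'M[R]_(d, c)) :
  symmetric e ->
  (forall i : 'I_n, (0 < degree e i)%N) ->
  (forall a : A, (0 < #|grp s a|)%N /\ (0 < #|grpC s a|)%N) ->
  let At := rw_matrix R e K in
  L_dp s At X W <=
  \sum_(a : A) spec_norm W *
     (`|beta_in s At a - beta_out s At a| * norm2 (mean X (grp s a) - mean X (grpC s a))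
      + 2 * Num.sqrt (d%:R) * \sum_(a' : A) delta s X a').
Proof.
move=> _ hdeg hgrp; cbv zeta; set At := rw_matrix R e K.
have [Age0 Asum] := @rw_stoch R n e K hdeg.
rewrite /L_dp; apply: ler_sum => a _.
set S := grp s a; set T := grpC s a.
have [S0 T0] := hgrp a.
have inT : forall u, (u \in T) = (u \notin S) by move=> u; rewrite !inE.
set mS := mean X S; set mT := mean X T.
pose ee := fun u => row u X - (if u \in S then mS else mT).
pose g := fun i => \sum_u At i u *: ee u.
pose al := fun i => \sum_(u in S) At i u.
have hh : forall i, sgcn_h At X i = mT + al i *: (mS - mT) + g i.
  move=> i; rewrite /sgcn_h.
  have -> : \sum_u At i u *: row u X =
      \sum_u (At i u *: mT + (At i u * (u \in S)%:R) *: (mS - mT) + At i u *: ee u).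
    apply: eq_bigr => u _; rewrite /ee -scalerA -!scalerDr; congr (_ *: _).
    case: (u \in S); rewrite ?scale1r ?scale0r ?addr0.
      by rewrite [mT + _]addrC subrK addrC subrK.
    by rewrite addrC subrK.
  rewrite !big_split /= -!scaler_suml Asum scale1r.
  congr (_ + _ *: _ + _).
  rewrite /al [RHS]big_mkcond; apply: eq_bigr => u _.
  by case: (u \in S); rewrite ?mulr1 ?mulr0.
have eS : (#|S|%:R)^-1 *: \sum_(i in S) logit At X W i =
    ((#|S|%:R)^-1 *: \sum_(i in S) sgcn_h At X i) *m W.
  by rewrite /logit -mulmx_suml scalemxAl.
have eT : (#|T|%:R)^-1 *: \sum_(i in T) logit At X W i =
    ((#|T|%:R)^-1 *: \sum_(i in T) sgcn_h At X i) *m W.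
  by rewrite /logit -mulmx_suml scalemxAl.
rewrite eS eT -mulmxBl.
have sS : \sum_(i in S) sgcn_h At X i = \sum_(i in S) (mT + al i *: (mS - mT) + g i).
  by apply: eq_bigr => i _; exact: hh.
have sT : \sum_(i in T) sgcn_h At X i = \sum_(i in T) (mT + al i *: (mS - mT) + g i).
  by apply: eq_bigr => i _; exact: hh.
rewrite sS sT !avg_decomp // zmod_aux -scalerBl.
have bS : (#|S|%:R)^-1 * \sum_(i in S) al i = beta_in s At a by [].
have bT : (#|T|%:R)^-1 * \sum_(i in T) al i = beta_out s At a by [].
rewrite bS bT.
set GS := (#|S|%:R)^-1 *: \sum_(i in S) g i.
set GT := (#|T|%:R)^-1 *: \sum_(i in T) g i.
apply: le_trans (spec_norm_le _ _ W _) _.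
apply: ler_wpM2l; first exact: spec_norm_ge0.
apply: le_trans (norm2D _ _) _.
rewrite norm2Z; apply: lerD => //.
have eb : forall u k, `|ee u 0 k| <= delta s X a.
  move=> u k; rewrite /ee; case: ifP => uS.
    apply: le_trans (normInf_ge _ k) _; apply: le_trans (dev_ge X S u uS) _.
    by rewrite /delta le_max lexx.
  have uT : u \in T by rewrite inT uS.
  apply: le_trans (normInf_ge _ k) _; apply: le_trans (dev_ge X T u uT) _.
  by rewrite /delta le_max lexx orbT.
have gb : forall i k, `|g i 0 k| <= delta s X a.
  move=> i k; rewrite /g summxE.
  apply: le_trans (ler_norm_sum _ _ _) _.
  apply: (@le_trans _ _ (\sum_u At i u * delta s X a)).
    apply: ler_sum => u _; rewrite mxE normrM ger0_norm //.
    by apply: ler_wpM2l => //; exact: eb.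
  by rewrite -mulr_suml Asum mul1r.
have Eb : forall k, `|(GS - GT) 0 k| <= 2 * delta s X a.
  move=> k.
  have -> : (GS - GT) 0 k = GS 0 k - GT 0 k by rewrite !mxE.
  apply: le_trans (ler_normB _ _) _.
  have h1 : `|GS 0 k| <= delta s X a by apply: avg_bound => // i; exact: gb.
  have h2 : `|GT 0 k| <= delta s X a by apply: avg_bound => // i; exact: gb.
  lra.
have da0 := delta_ge0 _ s X a.
have b0 : 0 <= 2 * delta s X a by lra.
apply: le_trans (norm2_bound (GS - GT) (2 * delta s X a) b0 Eb) _.
have := le_sum1 (fun a' => delta s X a') a (fun a' => delta_ge0 _ s X a').
have := sqrtr_ge0 (d%:R : R).
nra.
Qed.
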